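(* The logic $\mathsf{HLC}^\flat=\mathsf{ICK}\oplus(p\mathrel{\Box\!\!\!\rightarrow} p)\oplus(((p\mathrel{\Box\!\!\!\rightarrow} q)\wedge(q\mathrel{\Box\!\!\!\rightarrow} r))\to(p\mathrel{\Box\!\!\!\rightarrow} r))$ is sound and complete with respect to the class of conditional frames $(X,\leq,\mathcal{R})$ satisfying, for all $x\in X$ and upsets $a,b$: $R_a[x]\subseteq a$, and $R_a[x]\subseteq b$ implies $R_a[x]\subseteq{\uparrow}R_b[x]$.
   Context: Formulas: $\phi ::= p\mid\bot\mid\phi\wedge\phi\mid\phi\vee\phi\mid\phi\to\phi\mid\phi\mathrel{\Box\!\!\!\rightarrow}\phi$. $\mathsf{ICK}\oplus\Gamma$ is the smallest set containing intuitionistic propositional logic, $\Gamma$, $(p\mathrel{\Box\!\!\!\rightarrow}(q\wedge r))\leftrightarrow((p\mathrel{\Box\!\!\!\rightarrow} q)\wedge(p\mathrel{\Box\!\!\!\rightarrow} r))$ and $(p\mathrel{\Box\!\!\!\rightarrow}\top)\leftrightarrow\top$, closed under uniform substitution, modus ponens and congruence rules for both arguments of $\mathrel{\Box\!\!\!\rightarrow}$. A conditional frame is $(X,\leq,\mathcal{R})$, $(X,\leq)$ a nonempty preorder, $\mathcal{R}=\{R_a\mid a\text{ an upset}\}$ with $(\leq\circ R_a)\subseteq(R_a\circ\leq)$; valuations assign upsets to letters and $x\models\phi\mathrel{\Box\!\!\!\rightarrow}\psi$ iff every $y$ with $xR_{V(\phi)}y$ satisfies $\psi$. *)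

(* Defs.v *)
Set Implicit Arguments.

Inductive form : Type :=
| Var : nat -> form
| Bot : form
| And : form -> form -> form
| Or : form -> form -> form
| Imp : form -> form -> form
| Cond : form -> form -> form.

Definition Top : form := Imp Bot Bot.
Definition Iff (a b : form) : form := And (Imp a b) (Imp b a).

Fixpoint subst (s : nat -> form) (f : form) : form :=
  match f with
  | Var n => s n
  | Bot => Bot
  | And a b => And (subst s a) (subst s b)
  | Or a b => Or (subst s a) (subst s b)
  | Imp a b => Imp (subst s a) (subst s b)
  | Cond a b => Cond (subst s a) (subst s b)
  end.

Inductive ipc_axiom : form -> Prop :=
| ax_K : forall a b, ipc_axiom (Imp a (Imp b a))
| ax_S : forall a b c,
    ipc_axiom (Imp (Imp a (Imp b c)) (Imp (Imp a b) (Imp a c)))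
| ax_andE1 : forall a b, ipc_axiom (Imp (And a b) a)
| ax_andE2 : forall a b, ipc_axiom (Imp (And a b) b)
| ax_andI : forall a b, ipc_axiom (Imp a (Imp b (And a b)))
| ax_orI1 : forall a b, ipc_axiom (Imp a (Or a b))
| ax_orI2 : forall a b, ipc_axiom (Imp b (Or a b))
| ax_orE : forall a b c,
    ipc_axiom (Imp (Imp a c) (Imp (Imp b c) (Imp (Or a b) c)))
| ax_efq : forall a, ipc_axiom (Imp Bot a).

Definition p0 := Var 0.
Definition q0 := Var 1.
Definition r0 := Var 2.

Inductive ICK (Gamma : form -> Prop) : form -> Prop :=
| ick_ipc : forall a, ipc_axiom a -> ICK Gamma a
| ick_gamma : forall a, Gamma a -> ICK Gamma a
| ick_C : ICK Gamma (Iff (Cond p0 (And q0 r0)) (And (Cond p0 q0) (Cond p0 r0)))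
| ick_N : ICK Gamma (Iff (Cond p0 Top) Top)
| ick_subst : forall s a, ICK Gamma a -> ICK Gamma (subst s a)
| ick_mp : forall a b, ICK Gamma (Imp a b) -> ICK Gamma a -> ICK Gamma b
| ick_congl : forall a b c, ICK Gamma (Iff a b) ->
    ICK Gamma (Iff (Cond a c) (Cond b c))
| ick_congr : forall a b c, ICK Gamma (Iff a b) ->
    ICK Gamma (Iff (Cond c a) (Cond c b)).

Inductive HLCflat_axioms : form -> Prop :=
| hlc_id : HLCflat_axioms (Cond p0 p0)
| hlc_trans : HLCflat_axioms
    (Imp (And (Cond p0 q0) (Cond q0 r0)) (Cond p0 r0)).

Definition HLCflat : form -> Prop := ICK HLCflat_axioms.

Record cframe : Type := CFrame {
  cX : Type;
  cle : cX -> cX -> Prop;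
  cR : (cX -> Prop) -> cX -> cX -> Prop   (* R_a, only meaningful for upsets a *)
}.

Definition upset (F : cframe) (a : cX F -> Prop) : Prop :=
  forall x y, cle F x y -> a x -> a y.

Definition is_cframe (F : cframe) : Prop :=
  inhabited (cX F) /\
  (forall x, cle F x x) /\
  (forall x y z, cle F x y -> cle F y z -> cle F x z) /\
  (forall a b, upset F a -> upset F b -> (forall x, a x <-> b x) ->
     forall x y, cR F a x y <-> cR F b x y) /\
  (forall a, upset F a -> forall x y z, cle F x y -> cR F a y z ->
     exists w, cR F a x w /\ cle F w z).

Definition valuation (F : cframe) := nat -> cX F -> Prop.

Fixpoint forces (F : cframe) (V : valuation F) (x : cX F) (f : form) : Prop :=
  match f with
  | Var n => V n x
  | Bot => False
  | And a b => forces V x a /\ forces V x b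
  | Or a b => forces V x a \/ forces V x b
  | Imp a b => forall y, cle F x y -> forces V y a -> forces V y b
  | Cond a b => forall y, cR F (fun z => forces V z a) x y -> forces V y b
  end.

Definition valid (F : cframe) (f : form) : Prop :=
  forall V : valuation F, (forall n, upset F (V n)) ->
  forall x, forces V x f.

Definition hlcflat_frame (F : cframe) : Prop :=
  (forall a, upset F a -> forall x y, cR F a x y -> a y) /\
  (forall a b, upset F a -> upset F b -> forall x,
     (forall y, cR F a x y -> b y) ->
     forall y, cR F a x y -> exists z, cR F b x z /\ cle F z y).

(* Main.v *)
Require Import Defs.
From Stdlib Require Import Classical Cantor Arith Lia.

Section Sound.
Variable F : cframe.
Hypothesis HF : is_cframe F.
Hypothesis HH : hlcflat_frame F.

Lemma cf_refl : forall x, cle F x x.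
Proof. destruct HF as [_ [H _]]; exact H. Qed.
Lemma cf_trans : forall x y z, cle F x y -> cle F y z -> cle F x z.
Proof. destruct HF as [_ [_ [H _]]]; exact H. Qed.
Lemma cf_ext : forall a b, upset F a -> upset F b -> (forall x, a x <-> b x) ->
     forall x y, cR F a x y <-> cR F b x y.
Proof. destruct HF as [_ [_ [_ [H _]]]]; exact H. Qed.
Lemma cf_mon : forall a, upset F a -> forall x y z, cle F x y -> cR F a y z ->
     exists w, cR F a x w /\ cle F w z.
Proof. destruct HF as [_ [_ [_ [_ H]]]]; exact H. Qed.

Lemma persist (V : valuation F) : (forall n, upset F (V n)) ->
  forall f, upset F (fun x => forces V x f).
Proof.
  intros HV f; induction f; intros x y Hxy H; simpl in *.
  - eapply HV; eauto.
  - exact H.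
  - destruct H; split; [eapply IHf1|eapply IHf2]; eauto.
  - destruct H; [left; eapply IHf1|right; eapply IHf2]; eauto.
  - intros z Hyz Hz. apply H; auto. eapply cf_trans; eauto.
  - intros z Hz. destruct (@cf_mon _ IHf1 _ _ _ Hxy Hz) as [w [Hw1 Hw2]].
    eapply IHf2; [exact Hw2|]. apply H; auto.
Qed.

Lemma subst_forces (V : valuation F) : (forall n, upset F (V n)) ->
  forall s f x, forces V x (subst s f) <->
    forces (fun n y => forces V y (s n)) x f.
Proof.
  intros HV s f. induction f; intros x; simpl.
  - tauto.
  - tauto.
  - rewrite IHf1, IHf2; tauto.
  - rewrite IHf1, IHf2; tauto.
  - split; intros H y Hy; specialize (H y Hy); rewrite ?IHf1, ?IHf2 in *; auto.
  - assert (HV' : forall n, upset F (fun y => forces V y (s n))).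
    { intro n; apply persist; auto. }
    assert (E : forall y, cR F (fun z => forces V z (subst s f1)) x y <->
       cR F (fun z => forces (fun n y => forces V y (s n)) z f1) x y).
    { intro y. apply cf_ext; try apply persist; auto. }
    split; intros H y Hy.
    + apply IHf2. apply H. apply E; auto.
    + apply IHf2. apply H. apply E; auto.
Qed.

Lemma forces_iff (V : valuation F) x a b :
  forces V x (Iff a b) -> (forall y, cle F x y -> (forces V y a <-> forces V y b)).
Proof. simpl; intros [H1 H2] y Hy; split; auto. Qed.

Lemma soundness : forall f, HLCflat f -> valid F f.
Proof.
  intros f Hf. induction Hf; intros V HV x.
  - destruct H; simpl; intros.
    + eapply (persist _ HV a); [|exact H0]. exact H1.
    + assert (Hxy1 : cle F y y1) by (eapply cf_trans; eauto).
      assert (Hb : forces V y1 b).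
      { apply H2; auto. }
      exact (H0 y1 Hxy1 H4 y1 (cf_refl _) Hb).
    + tauto.
    + tauto.
    + split; auto. eapply persist; eauto.
    + tauto.
    + tauto.
    + destruct H4; [apply H0|apply H2]; auto using cf_refl; eapply cf_trans; eauto.
    + contradiction.
  - destruct H; simpl; intros.
    + destruct HH as [H1 _]. eapply H1; [|exact H]. apply HV.
    + destruct H0 as [Hq Hr]. destruct HH as [G1 G2].
      destruct (G2 _ _ (HV 0) (HV 1) y Hq y0 H1) as [z [Hz1 Hz2]].
      eapply HV; [exact Hz2|]. apply Hr; auto.
  - simpl; split; intros; firstorder.
  - simpl; split; intros; auto.
  - apply subst_forces; auto. apply IHHf. intro n. apply persist; auto.
  - specialize (IHHf1 V HV x). simpl in IHHf1. apply (IHHf1 x (cf_refl x)). apply IHHf2; auto.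
  - assert (E : forall z, forces V z a <-> forces V z b).
    { intro z. apply (forces_iff V z a b (IHHf V HV z)). apply cf_refl. }
    assert (E2 : forall z y, cR F (fun w => forces V w a) z y <-> cR F (fun w => forces V w b) z y).
    { intros; apply cf_ext; try apply persist; auto. }
    simpl; split; intros y _ H z Hz; apply H; apply E2; auto.
  - assert (E : forall z, forces V z a <-> forces V z b).
    { intro z. apply (forces_iff V z a b (IHHf V HV z)). apply cf_refl. }
    simpl; split; intros y _ H z Hz; apply E; apply H; auto.
Qed.
End Sound.
Set Implicit Arguments.

Inductive Der (G : form -> Prop) : form -> Prop :=
| Dax : forall a, HLCflat a -> Der G a
| Dhyp : forall a, G a -> Der G a
| Dmp : forall a b, Der G (Imp a b) -> Der G a -> Der G b.

Definition ext1 (G : form -> Prop) a := fun x => G x \/ x = a.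

Lemma ipc G a : ipc_axiom a -> Der G a.
Proof. intro H; apply Dax, ick_ipc, H. Qed.

Lemma Der_mono G G' a : Der G a -> (forall x, G x -> G' x) -> Der G' a.
Proof. induction 1; intros; [apply Dax|apply Dhyp|eapply Dmp]; eauto. Qed.

Lemma Der_I G a : Der G (Imp a a).
Proof.
  eapply Dmp; [eapply Dmp; [apply ipc, (ax_S a (Imp a a) a)| apply ipc, ax_K]|apply ipc, ax_K].
Qed.

Lemma deduction G a b : Der (ext1 G a) b -> Der G (Imp a b).
Proof.
  induction 1.
  - eapply Dmp; [apply ipc, ax_K|]. apply Dax; auto.
  - destruct H as [H|H]; [|subst; apply Der_I].
    eapply Dmp; [apply ipc, ax_K|]. apply Dhyp; auto.
  - eapply Dmp; [eapply Dmp; [apply ipc, ax_S|exact IHDer1]|exact IHDer2].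
Qed.

Lemma Der_empty a : Der (fun _ => False) a -> HLCflat a.
Proof. induction 1; [auto|contradiction|eapply ick_mp; eauto]. Qed.

Lemma thm_of a : (forall G, Der G a) -> HLCflat a.
Proof. intro H; apply Der_empty, H. Qed.

Lemma mp1 G a b : Der G (Imp a b) -> Der G a -> Der G b.
Proof. apply Dmp. Qed.
Lemma andI G a b : Der G a -> Der G b -> Der G (And a b).
Proof. intros; eapply Dmp; [eapply Dmp; [apply ipc, ax_andI|]|]; eauto. Qed.
Lemma andE1 G a b : Der G (And a b) -> Der G a.
Proof. intros; eapply Dmp; [apply ipc, ax_andE1|]; eauto. Qed.
Lemma andE2 G a b : Der G (And a b) -> Der G b.
Proof. intros; eapply Dmp; [apply ipc, ax_andE2|]; eauto. Qed.
Lemma iffE1 G a b : Der G (Iff a b) -> Der G a -> Der G b.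
Proof. intros H1 H2. eapply Dmp; [eapply andE1; exact H1|exact H2]. Qed.
Lemma iffE2 G a b : Der G (Iff a b) -> Der G b -> Der G a.
Proof. intros H1 H2. eapply Dmp; [eapply andE2; exact H1|exact H2]. Qed.
Lemma hyp1 G a : Der (ext1 G a) a.
Proof. apply Dhyp; right; auto. Qed.
Lemma weak1 G a b : Der G b -> Der (ext1 G a) b.
Proof. intro H; eapply Der_mono; eauto. intros; left; auto. Qed.

Definition s3 a b c : nat -> form := fun n =>
  match n with 0 => a | 1 => b | 2 => c | _ => Var n end.

Lemma thm_C a b c : HLCflat (Iff (Cond a (And b c)) (And (Cond a b) (Cond a c))).
Proof. exact (ick_subst (s3 a b c) (ick_C _)). Qed.
Lemma thm_N a : HLCflat (Iff (Cond a Top) Top).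
Proof. exact (ick_subst (s3 a a a) (ick_N _)). Qed.
Lemma thm_id a : HLCflat (Cond a a).
Proof. exact (ick_subst (s3 a a a) (@ick_gamma _ _ hlc_id)). Qed.
Lemma thm_tr a b c : HLCflat (Imp (And (Cond a b) (Cond b c)) (Cond a c)).
Proof. exact (ick_subst (s3 a b c) (@ick_gamma _ _ hlc_trans)). Qed.

Lemma Cond_nec a c : HLCflat c -> HLCflat (Cond a c).
Proof.
  intro Hc.
  assert (E : HLCflat (Iff (Cond a c) (Cond a Top))).
  { apply ick_congr. apply thm_of; intro G. apply andI.
    - eapply Dmp; [apply ipc, ax_K|]. apply Der_I.
    - eapply Dmp; [apply ipc, ax_K|]. apply Dax; auto. }
  apply thm_of; intro G.
  eapply iffE2; [apply Dax, E|].
  eapply iffE2; [apply Dax, thm_N|]. apply Der_I.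
Qed.

Lemma Cond_mono a b c : HLCflat (Imp b c) -> HLCflat (Imp (Cond a b) (Cond a c)).
Proof.
  intro Hbc.
  assert (E : HLCflat (Iff (Cond a b) (Cond a (And b c)))).
  { apply ick_congr. apply thm_of; intro G. apply andI.
    - apply deduction. apply andI; [apply hyp1|].
      eapply Dmp; [apply Dax; exact Hbc|apply hyp1].
    - apply ipc, ax_andE1. }
  apply thm_of; intro G. apply deduction.
  eapply andE2. eapply iffE1; [apply Dax, thm_C|].
  eapply iffE1; [apply Dax, E|apply hyp1].
Qed.

Fixpoint enc (f : form) : nat :=
  match f with
  | Var n => to_nat (0, n)
  | Bot => to_nat (1, 0)
  | And a b => to_nat (2, to_nat (enc a, enc b))
  | Or a b => to_nat (3, to_nat (enc a, enc b))
  | Imp a b => to_nat (4, to_nat (enc a, enc b))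
  | Cond a b => to_nat (5, to_nat (enc a, enc b))
  end.

Fixpoint dec (k n : nat) : form :=
  match k with
  | 0 => Bot
  | S k =>
    let (t, m) := of_nat n in
    let (i, j) := of_nat m in
    match t with
    | 0 => Var m
    | 1 => Bot
    | 2 => And (dec k i) (dec k j)
    | 3 => Or (dec k i) (dec k j)
    | 4 => Imp (dec k i) (dec k j)
    | _ => Cond (dec k i) (dec k j)
    end
  end.

Fixpoint fsize (f : form) : nat :=
  match f with
  | And a b | Or a b | Imp a b | Cond a b => S (max (fsize a) (fsize b))
  | _ => 1
  end.

Lemma dec_enc f : forall k, fsize f <= k -> dec k (enc f) = f.
Proof.
  induction f; intros k Hk; destruct k as [|k]; simpl in Hk; try lia; cbn [dec enc];
  rewrite ?cancel_of_to.
  - destruct (of_nat n); reflexivity.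
  - reflexivity.
  - rewrite IHf1, IHf2 by lia; reflexivity.
  - rewrite IHf1, IHf2 by lia; reflexivity.
  - rewrite IHf1, IHf2 by lia; reflexivity.
  - rewrite IHf1, IHf2 by lia; reflexivity.
Qed.

Definition enum (n : nat) : form := let (k, m) := of_nat n in dec k m.

Lemma enum_surj f : exists n, enum n = f.
Proof.
  exists (to_nat (fsize f, enc f)). unfold enum. rewrite cancel_of_to.
  apply dec_enc; auto.
Qed.

Section Lind.
Variable G0 : form -> Prop.
Variable psi : form.
Hypothesis Hnd : ~ Der G0 psi.

Fixpoint chain (n : nat) : form -> Prop :=
  match n with
  | 0 => G0
  | S n => fun x => chain n x \/ (x = enum n /\ ~ Der (ext1 (chain n) (enum n)) psi)
  end.

Lemma chain_mono n m : n <= m -> forall x, chain n x -> chain m x.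
Proof. induction 1; simpl; auto. Qed.

Lemma chain_nd n : ~ Der (chain n) psi.
Proof.
  induction n; simpl; auto.
  destruct (classic (Der (ext1 (chain n) (enum n)) psi)) as [D|D]; intro H.
  - apply IHn. eapply Der_mono; [exact H|]. intros x [Hx|[_ Hx]]; tauto.
  - apply D. eapply Der_mono; [exact H|]. intros x [Hx|[Hx _]]; [left|right]; auto.
Qed.

Definition lim (x : form) := exists n, chain n x.

Lemma lim_compact a : Der lim a -> exists n, Der (chain n) a.
Proof.
  induction 1.
  - exists 0; apply Dax; auto.
  - destruct H as [n Hn]; exists n; apply Dhyp; auto.
  - destruct IHDer1 as [n1 H1], IHDer2 as [n2 H2]. exists (max n1 n2).
    eapply Dmp; eapply Der_mono; eauto; apply chain_mono; lia.
Qed.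

Lemma lim_nd : ~ Der lim psi.
Proof. intro H; destruct (lim_compact H) as [n Hn]; eapply chain_nd; eauto. Qed.

Lemma lim_step a : ~ lim a -> Der lim (Imp a psi).
Proof.
  intro Ha. destruct (enum_surj a) as [n Hn]. subst a.
  apply deduction.
  apply NNPP; intro D. apply Ha. exists (S n). simpl. right. split; auto.
  intro D'. apply D. eapply Der_mono; [exact D'|].
  intros x [Hx|Hx]; [left; exists n; auto|right; auto].
Qed.

Lemma lim_closed a : Der lim a -> lim a.
Proof.
  intros H. apply NNPP; intro Ha. apply lim_nd. eapply Dmp; [apply lim_step|]; eauto.
Qed.

Lemma lim_prime a b : lim (Or a b) -> lim a \/ lim b.
Proof.
  intro H. apply NNPP; intro Hn. apply lim_nd.
  eapply Dmp; [eapply Dmp; [eapply Dmp; [apply ipc, (ax_orE a b psi)|]|]|].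
  - apply lim_step; tauto.
  - apply lim_step; tauto.
  - apply Dhyp; auto.
Qed.

Lemma lim_cons : ~ lim Bot.
Proof. intro H; apply lim_nd. eapply Dmp; [apply ipc, ax_efq|apply Dhyp; exact H]. Qed.

Lemma lim_incl x : G0 x -> lim x.
Proof. intro; exists 0; auto. Qed.

Lemma lim_psi : ~ lim psi.
Proof. intro H; apply lim_nd; apply Dhyp; auto. Qed.
End Lind.

Record world := W {
  th : form -> Prop;
  w_closed : forall a, Der th a -> th a;
  w_cons : ~ th Bot;
  w_prime : forall a b, th (Or a b) -> th a \/ th b }.

Lemma lindenbaum G psi : ~ Der G psi ->
  exists w : world, (forall a, G a -> th w a) /\ ~ th w psi.
Proof.
  intro H.
  exists (W (lim_closed H) (lim_cons H) (lim_prime H)). simpl.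
  split; [apply lim_incl|apply lim_psi; exact H].
Qed.

Definition wle (x y : world) := forall a, th x a -> th y a.

Definition Delta (x : world) a := fun c => th x (Cond a c).

Definition cRc (B : world -> Prop) (x y : world) : Prop :=
  exists a (x' : world), wle x x' /\
    (forall z : world, (forall c, Delta x' a c -> th z c) -> B z) /\
    (forall c, Delta x' a c -> th y c).

Definition canon : cframe := CFrame wle cRc.

Lemma th_thm (x : world) a : HLCflat a -> th x a.
Proof. intro; apply w_closed, Dax; auto. Qed.

Lemma th_mp (x : world) a b : th x (Imp a b) -> th x a -> th x b.
Proof. intros; apply w_closed; eapply Dmp; apply Dhyp; eauto. Qed.

Lemma th_and (x : world) a b : th x a -> th x b -> th x (And a b).
Proof. intros; apply w_closed; apply andI; apply Dhyp; auto. Qed.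

Lemma Delta_der (x : world) a c : Der (Delta x a) c -> th x (Cond a c).
Proof.
  induction 1.
  - apply th_thm, Cond_nec; auto.
  - auto.
  - assert (C2 : HLCflat (Imp (And (Cond a (Imp a0 b)) (Cond a a0)) (Cond a (And (Imp a0 b) a0)))).
    { apply thm_of; intro G. eapply andE2. apply Dax, thm_C. }
    assert (M : HLCflat (Imp (And (Imp a0 b) a0) b)).
    { apply thm_of; intro G. apply deduction.
      eapply Dmp; [eapply andE1, hyp1|eapply andE2, hyp1]. }
    eapply th_mp; [apply th_thm, (Cond_mono a M)|].
    eapply th_mp; [apply th_thm, C2|]. apply th_and; auto.
Qed.

Definition cV : valuation canon := fun n (x : world) => th x (Var n).

Lemma Cond_of_R (x : world) a c :
  (forall z : world, (forall d, Delta x a d -> th z d) -> th z c) -> th x (Cond a c).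
Proof.
  intro H. apply NNPP; intro Hn.
  destruct (@lindenbaum (Delta x a) c) as [z [Hz1 Hz2]].
  { intro D; apply Hn, Delta_der, D. }
  apply Hz2, H, Hz1.
Qed.

Lemma truth : forall f (x : world), @forces canon cV x f <-> th x f.
Proof.
  induction f; intro x; simpl.
  - tauto.
  - split; [tauto|apply w_cons].
  - rewrite IHf1, IHf2. split; [intros [? ?]; apply th_and; auto|].
    intro H; split; apply w_closed; [eapply andE1|eapply andE2]; apply Dhyp; exact H.
  - rewrite IHf1, IHf2. split.
    + intros [H|H]; apply w_closed; (eapply Dmp; [apply ipc; constructor|apply Dhyp; exact H]).
    + apply w_prime.
  - split.
    + intro H. apply NNPP; intro Hn.
      destruct (@lindenbaum (ext1 (th x) f1) f2) as [y [Hy1 Hy2]].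
      { intro D. apply Hn, w_closed, deduction, D. }
      apply Hy2. apply IHf2. apply H.
      * intros a Ha; apply Hy1; left; auto.
      * apply IHf1, Hy1; right; auto.
    + intros H y Hxy Hy. apply IHf2. apply IHf1 in Hy.
      eapply th_mp; [apply Hxy, H|exact Hy].
  - split.
    + intro H. apply Cond_of_R. intros z Hz. apply IHf2. apply H.
      exists f1, x. split; [intros a Ha; exact Ha|]. split; [|exact Hz].
      intros z' Hz'. apply IHf1. apply Hz'. apply th_thm, thm_id.
    + intros H y [a [x' [Hxx' [HB Hy]]]]. apply IHf2.
      assert (Ha : th x' (Cond a f1)).
      { apply Cond_of_R. intros z Hz. apply IHf1, HB, Hz. }
      apply Hy. unfold Delta. eapply th_mp; [apply th_thm, thm_tr|].
      apply th_and; [exact Ha|apply Hxx', H].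
Qed.

Lemma canon_frame (w : world) : is_cframe canon.
Proof.
  split; [constructor; exact w|].
  split; [intros x a H; exact H|].
  split; [intros x y z H1 H2 a Ha; auto|].
  split.
  - intros a b _ _ E x y; simpl; unfold cRc. split;
      intros [c [x' [H1 [H2 H3]]]]; exists c, x'; split; auto; split; auto;
      intros z Hz; apply E; auto.
  - intros a _ x y z Hxy [c [y' [H1 [H2 H3]]]]. exists z. split; [|intros d Hd; exact Hd].
    exists c, y'. split; [intros d Hd; apply H1, Hxy, Hd|auto].
Qed.

Lemma canon_hlc : hlcflat_frame canon.
Proof.
  split.
  - intros a _ x y [c [x' [H1 [H2 H3]]]]. apply H2, H3.
  - intros a b _ _ x Hab y [c [x' [H1 [H2 H3]]]]. exists y. split; [|intros d Hd; exact Hd].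
    exists c, x'. split; auto. split; auto.
    intros z Hz. apply Hab. exists c, x'; auto.
Qed.

Lemma completeness f :
  (forall F : cframe, is_cframe F -> hlcflat_frame F -> valid F f) -> HLCflat f.
Proof.
  intro H. apply NNPP; intro Hn.
  destruct (@lindenbaum (fun _ => False) f) as [w [_ Hw]].
  { intro D; apply Hn, Der_empty, D. }
  apply Hw. apply truth. apply (H canon (canon_frame w) canon_hlc cV).
  intros n x y Hxy Hx. apply Hxy, Hx.
Qed.

Theorem theorem5p10 : forall f : form,
  HLCflat f <->
  (forall F : cframe, is_cframe F -> hlcflat_frame F -> valid F f).
Proof.
  intro f. split.
  - intros H F HF HH. exact (@soundness F HF HH f H).
  - apply completeness.
Qed.
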